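(* Let $\gamma\in(0,1)$ and $\alpha_n=\gamma/(1+n\gamma)$ for $n\ge0$. Then for nonnegative integers $n,m$, \[ \mu_{n,m}=\begin{cases}\delta_{n,m}&\text{if } n\le m,\\ \dfrac{\gamma}{1+m\gamma}&\text{if } n>m.\end{cases} \]
   Context: For a polynomial $f(z)=\sum_{k=0}^n a_kz^k$ of degree $n$, write $\overline{f}(z)=\sum_k\overline{a_k}z^k$ and $f^*(z)=z^n\overline{f}(1/z)$. Given $(\alpha_n)$ with $|\alpha_n|<1$, define monic $\Phi_n$ by $\Phi_0=1$, $\Phi_{n+1}(z)=z\Phi_n(z)-\overline{\alpha_n}\Phi_n^*(z)$. Let $\mathcal{L}$ be the unique linear functional on Laurent polynomials with $\mathcal{L}(1)=1$ and $\mathcal{L}(\Phi_m(z)\overline{\Phi_n}(1/z))=0$ for $m\neq n$; set $\langle f,g\rangle=\mathcal{L}(f(z)\overline{g}(1/z))$ and $\mu_{n,m}=\langle\Phi_m(z),z^n\rangle/\langle\Phi_m,\Phi_m\rangle$. *)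

(* Defs.v *)
From HB Require Import structures.
From mathcomp Require Import all_boot all_order all_algebra.
From mathcomp Require Import complex.
Set Implicit Arguments. Unset Strict Implicit. Unset Printing Implicit Defensive.
Import Order.TTheory GRing.Theory Num.Theory.
Local Open Scope ring_scope.

Section OPUC.
Variable R : rcfType.
Local Notation C := R[i].

Definition conjp (p : {poly C}) : {poly C} := map_poly (fun x => x^*) p.

(* reversed polynomial f^*(z) = z^n \overline{f}(1/z), n = deg f *)
Definition revstar (p : {poly C}) : {poly C} :=
  \poly_(i < size p) (p`_((size p).-1 - i))^*.

Fixpoint Phi (a : nat -> C) (n : nat) : {poly C} :=
  match n with
  | 0 => 1
  | n'.+1 => 'X * Phi a n' - (a n')^* *: revstar (Phi a n')
  end.

(* A linear functional L on Laurent polynomials is determined by (and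
   represented by) its moments c k = L(z^k), k : int.  Then
   <f, g> = L(f(z) \overline{g}(1/z)) = sum_{i,j} f_i conj(g_j) c (i - j). *)
Definition lpair (c : int -> C) (f g : {poly C}) : C :=
  \sum_(i < size f) \sum_(j < size g) f`_i * (g`_j)^* * c (i%:Z - j%:Z).

Definition mu (a : nat -> C) (c : int -> C) (n m : nat) : C :=
  lpair c (Phi a m) ('X^n) / lpair c (Phi a m) (Phi a m).

End OPUC.

(* Main.v *)
Require Import Defs.
From HB Require Import structures.
From mathcomp Require Import all_boot all_order all_algebra.
From mathcomp Require Import complex.
From mathcomp Require Import ring lra.
Import Order.TTheory GRing.Theory Num.Theory.
Local Open Scope ring_scope.

Section Aux.
Variable R : rcfType.
Local Notation C := R[i].

Definition Pe (a : nat -> C) (n : nat) : {poly C} :=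
  \poly_(i < n.+1) (if i == n then 1 else - a n.-1).

Lemma size_Pe a n : size (Pe a n) = n.+1.
Proof. by rewrite /Pe size_poly_eq //= eqxx oner_eq0. Qed.

Lemma coef_Pe a n j : (Pe a n)`_j = if (j < n.+1)%N then (if j == n then 1 else - a n.-1) else 0.
Proof. by rewrite /Pe coef_poly. Qed.

Lemma Phi_Pe (a : nat -> C) :
  (forall k, (a k)^* = a k) ->
  (forall k, a k * (1 - a k.+1) = a k.+1) ->
  forall n, Phi a n = Pe a n.
Proof.
move=> Hc Hrec; elim=> [|n IH].
  apply/polyP=> j; rewrite coef_Pe /= coefC; by case: j => [|[|j]].
rewrite /= IH; apply/polyP=> j.
rewrite coefB coefXM coefZ /revstar size_Pe !coef_poly /=.
case: j => [|k] /=.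
  by rewrite subn0 ltnSn eqxx conjC1 Hc mulr1 sub0r.
case: (ltngtP k n) => Hkn.
- have -> : (n - k.+1 < n.+1)%N by rewrite ltnS leq_subr.
  have -> : ((n - k.+1)%N == n) = false by apply/negbTE; rewrite neq_ltn ltn_subrL /=; case: (n) Hkn.
  rewrite !ltnS (ltnW Hkn) Hkn eqSS (ltn_eqF Hkn).

  rewrite rmorphN Hc.
  case: n Hkn IH => [//|n] _ _ /=.
  rewrite Hc; transitivity (- (a n * (1 - a n.+1))); [ring | by rewrite Hrec].
- have h1 : (k < n.+1)%N = false by rewrite ltnS leqNgt Hkn.
  have h2 : (k.+1 < n.+1)%N = false by rewrite ltnS ltnNge ltnW.
  have h3 : (k.+1 < n.+2)%N = false by rewrite !ltnS leqNgt Hkn.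
  by rewrite h1 h2 h3 mulr0 subr0.
- subst k. by rewrite ltnSn ltnn eqxx mulr0 subr0 ltnS ltnSn.
Qed.

Lemma lpairX (c : int -> C) f n :
  lpair c f 'X^n = \sum_(i < size f) f`_i * c (i%:Z - n%:Z).
Proof.
apply: eq_bigr => i _; rewrite size_polyXn big_ord_recr /= coefXn eqxx conjC1 mulr1.
rewrite big1 ?add0r // => j _ /=.
rewrite coefXn (_ : (j == n :> nat) = false) ?conjC0 ?mulr0 ?mul0r //.
by apply/negbTE; rewrite neq_ltn ltn_ord.
Qed.

Lemma lpair1 (c : int -> C) g :
  lpair c 1 g = \sum_(j < size g) (g`_j)^* * c (- j%:Z).
Proof.
rewrite /lpair size_polyC oner_eq0 big_ord1 /=.
by apply: eq_bigr => j _; rewrite coefC /= mul1r sub0r.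
Qed.

Lemma lpair_dec (c : int -> C) f g :
  lpair c f g = \sum_(j < size g) (g`_j)^* * lpair c f 'X^j.
Proof.
under [RHS]eq_bigr => j _ do rewrite lpairX.
rewrite /lpair exchange_big /=; apply: eq_bigr => j _.
rewrite mulr_sumr; apply: eq_bigr => i _; ring.
Qed.


Lemma Pe0 a : Pe a 0 = 1.
Proof. by apply/polyP => j; rewrite coef_Pe coefC; case: j. Qed.

Variables (G : C) (a : nat -> C) (c : int -> C).
Hypothesis HD : forall k : nat, 1 + k%:R * G != 0.
Hypothesis H1 : 1 - G != 0.
Hypothesis aE : forall k, a k = G / (1 + k%:R * G).
Hypothesis Hc : forall k, (a k)^* = a k.
Hypothesis c0 : c 0 = 1.
Hypothesis Hort : forall m n : nat, m <> n -> lpair c (Pe a m) (Pe a n) = 0.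

Lemma a_id k : a k * (1 + k%:R * G) = G.
Proof. rewrite aE; field; exact: HD. Qed.

Lemma sum_d (d : nat -> C) n : d 0%N = 1 -> (forall k, (k < n)%N -> d k.+1 = G) ->
  \sum_(i < n.+1) d i = 1 + n%:R * G.
Proof.
move=> d0 dk; rewrite big_ord_recl /= d0; congr (_ + _).
rewrite (eq_bigr (fun _ => G)); last by move=> i _; rewrite /bump /= dk.
by rewrite sumr_const card_ord mulr_natl.
Qed.

Lemma c_pos n : c (Posz n.+1) = G.
Proof.
suff H : forall N k, (k < N)%N -> c (Posz k.+1) = G by exact: (H n.+1).
elim=> [//|N IH] k; rewrite ltnS leq_eqVlt => /orP [/eqP -> | /IH //].
have H0 : N.+1 <> 0%N by [].
have := Hort _ _ H0.
rewrite Pe0 -(expr0 'X) lpairX size_Pe big_ord_recr /= coef_Pe ltnSn eqxx mul1r subr0.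
rewrite (eq_bigr (fun i : 'I_N.+1 => - a N * c (Posz i))); last first.
  move=> i _; rewrite coef_Pe /= ltnS (ltnW (ltn_ord i)) ifF ?subr0 //.
  by apply/negbTE; rewrite neq_ltn ltn_ord.
have Hs : \sum_(i < N.+1) c (Posz i) = 1 + N%:R * G :=
  sum_d (fun i : nat => c (Posz i)) N c0 (fun k0 Hk => IH k0 Hk).
rewrite -mulr_sumr Hs.
rewrite mulNr a_id => /eqP; rewrite addrC subr_eq0 => /eqP //.
Qed.

Lemma c_neg n : c (- (Posz n.+1)) = G.
Proof.
suff H : forall N k, (k < N)%N -> c (- Posz k.+1) = G by exact: (H n.+1).
elim=> [//|N IH] k; rewrite ltnS leq_eqVlt => /orP [/eqP -> | /IH //].
have H0 : 0%N <> N.+1 by [].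
have := Hort _ _ H0.
rewrite Pe0 lpair1 size_Pe big_ord_recr /= coef_Pe ltnSn eqxx conjC1 mul1r.
rewrite (eq_bigr (fun i : 'I_N.+1 => - a N * c (- Posz i))); last first.
  move=> i _; rewrite coef_Pe /= ltnS (ltnW (ltn_ord i)) ifF; first by rewrite rmorphN /= Hc.
  by apply/negbTE; rewrite neq_ltn ltn_ord.
have Hs : \sum_(i < N.+1) c (- Posz i) = 1 + N%:R * G :=
  sum_d (fun i : nat => c (- Posz i)) N c0 (fun k0 Hk => IH k0 Hk).
rewrite -mulr_sumr Hs.
rewrite mulNr a_id => /eqP; rewrite addrC subr_eq0 => /eqP //.
Qed.

Lemma cval (k : int) : c k = if k == 0 then 1 else G.
Proof.
case: k => [[|n]|n] /=; first by rewrite c0.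
  exact: c_pos.
by rewrite NegzE c_neg.
Qed.

Lemma sum_ind m n : \sum_(i < m) c (Posz i - Posz n) = m%:R * G + (n < m)%:R * (1 - G).
Proof.
elim: m => [|m IH]; first by rewrite big_ord0 ltn0 !mul0r addr0.
rewrite big_ord_recr /= IH cval subr_eq0 eqz_nat.
case: (eqVneq m n) => [->|Hmn].
  by rewrite ltnn ltnSn /=; ring.
have -> : (n < m.+1)%N = (n < m)%N by rewrite ltnS leq_eqVlt eq_sym (negbTE Hmn).
rewrite /=; ring.
Qed.

Definition S m n := (if m == n then 1 else G) - a m.-1 * (m%:R * G + (n < m)%:R * (1 - G)).

Lemma SE m n : lpair c (Pe a m) 'X^n = S m n.
Proof.
rewrite lpairX size_Pe big_ord_recr /= coef_Pe ltnSn eqxx mul1r cval subr_eq0 eqz_nat.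
rewrite (eq_bigr (fun i : 'I_m => - a m.-1 * c (Posz i - Posz n))); last first.
  move=> i _; rewrite coef_Pe /= ltnS (ltnW (ltn_ord i)) ifF //.
  by apply/negbTE; rewrite neq_ltn ltn_ord.
rewrite -mulr_sumr sum_ind /S; ring.
Qed.

Lemma S_lt m n : (n < m)%N -> S m n = 0.
Proof.
move=> Hnm; rewrite /S (gtn_eqF Hnm) Hnm mul1r.
case: m Hnm => [//|k] _ /=.
have := a_id k; rewrite -[k.+1%:R]natr1 => H.
rewrite -{1}H; ring.
Qed.

Lemma normE m : lpair c (Pe a m) (Pe a m) = S m m.
Proof.
rewrite lpair_dec size_Pe big_ord_recr /= coef_Pe ltnSn eqxx conjC1 mul1r SE.
rewrite big1 ?add0r // => i _.
by rewrite SE S_lt ?mulr0.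
Qed.

End Aux.
Arguments Pe {R}.


Theorem proposition4p5 (R : rcfType) (gamma : R) (c : int -> R[i]) :
  0 < gamma < 1 ->
  let alpha := fun n : nat => ((gamma / (1 + n%:R * gamma))%:C)%C in
  c 0 = 1 ->
  (forall m n : nat, m <> n -> lpair c (Phi alpha m) (Phi alpha n) = 0) ->
  forall n m : nat,
    mu alpha c n m =
      if (n <= m)%N then (n == m)%:R
      else ((gamma / (1 + m%:R * gamma))%:C)%C.
Proof.
move=> /andP [g0 g1] alpha c0 Hort n m.
set G := (gamma%:C)%C.
have HDr k : 0 < 1 + k%:R * gamma by have := ler0n R k; nra.
have HDe k : 1 + k%:R * G = ((1 + k%:R * gamma)%:C)%C by rewrite rmorphD rmorph1 rmorphM rmorph_nat.
have HD k : 1 + k%:R * G != 0 by rewrite HDe fmorph_eq0 gt_eqF.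
have H1 : 1 - G != 0.
  have -> : 1 - G = ((1 - gamma)%:C)%C by rewrite rmorphB rmorph1.
  by rewrite fmorph_eq0 subr_eq0 eq_sym lt_eqF.
have aE k : alpha k = G / (1 + k%:R * G) by rewrite /alpha fmorph_div HDe.
have Hc k : (alpha k)^* = alpha k by apply: conj_Creal; rewrite /alpha complex_real.
have Hrec k : alpha k * (1 - alpha k.+1) = alpha k.+1.
  rewrite !aE; field; by rewrite nat1r !HD.
have HPhi := @Phi_Pe R alpha Hc Hrec.
have Hort' m' n' : m' <> n' -> lpair c (Pe alpha m') (Pe alpha n') = 0.
  by move=> h; rewrite -!HPhi; apply: Hort.
rewrite /mu !HPhi (@SE R G alpha c HD aE Hc c0 Hort') (@normE R G alpha c HD aE Hc c0 Hort').
have Smm : S R G alpha m m != 0.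
  case: m => [|k]; rewrite /S eqxx ltnn /= !(mul0r, addr0, mulr0, subr0).
    by rewrite oner_eq0.
  have -> : 1 - alpha k * (k.+1%:R * G) = (1 - G) * (1 + k.+1%:R * G) / (1 + k%:R * G).
    rewrite aE; field; exact: HD.
  by rewrite mulf_neq0 ?invr_eq0 ?mulf_neq0.
case: (ltngtP n m) => Hnm.
- by rewrite (@S_lt R G alpha HD aE) // mul0r.
- transitivity (alpha m); last by [].
  rewrite /S eqxx ltnn (ltn_eqF Hnm) ltnNge (ltnW Hnm) /= mul0r !addr0.
  case: m Hnm Smm => [|k] _ _ /=.
    by rewrite !mul0r mulr0 !subr0 divr1 aE; field.
  have -> : 1 - alpha k * (k.+1%:R * G) = (1 - G) * (1 + k.+1%:R * G) / (1 + k%:R * G).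
    rewrite aE; field; exact: HD.
  have -> : G - alpha k * (k.+1%:R * G) = G * (1 - G) / (1 + k%:R * G).
    rewrite aE; field; exact: HD.
  rewrite aE; field; rewrite nat1r; apply/and3P; split; [exact: (HD k.+1) | exact: HD | exact: H1].
- by rewrite Hnm divff.
Qed.
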